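(* Let $x:[0,\infty)\to\mathbb{R}^m$ be of the form $x(t)=\sum_{i=0}^{n-1}y_i\,\theta_i(t)$ with vectors $y_0,\ldots,y_{n-1}\in\mathbb{R}^m$ and scalar functions $\theta_0,\ldots,\theta_{n-1}$ such that for all $t\ge 0$: (i) $\theta_i(t)\ge 0$ for all $i$; (ii) there are fixed scalars $\beta_0,\ldots,\beta_{n-1}>0$ with $\beta_i\theta_i(t)\ge\beta_j\theta_j(t)$ whenever $i\le j$; (iii) $\theta_0(t)\le 1$. Then for all $t\ge 0$, $$x(t)\in\operatorname{conv}\left\{\sum_{j=0}^{i-1}\frac{\beta_0}{\beta_j}y_j\;:\;i=0,1,\ldots,n\right\},$$ i.e. $x(t)$ lies in the convex hull of $0,\ \frac{\beta_0}{\beta_0}y_0,\ \ldots,\ \sum_{j=0}^{n-1}\frac{\beta_0}{\beta_j}y_j$.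
   Context: In the paper, $x$ is the solution of an $n$-th order linear companion system and the $y_i$ depend on its initial state, but the statement only uses the displayed representation. An empty sum is $0$; $\operatorname{conv}$ denotes convex hull. *)

(* Defs.v *)
From mathcomp Require Import all_boot all_order all_algebra.
Set Implicit Arguments. Unset Strict Implicit. Unset Printing Implicit Defensive.
Import Order.TTheory GRing.Theory Num.Theory.
Local Open Scope ring_scope.

Definition in_conv_hull (R : numDomainType) (V : lmodType R) (k : nat)
  (p : 'I_k -> V) (x : V) : Prop :=
  exists lam : 'I_k -> R,
    (forall i, 0 <= lam i) /\ \sum_(i < k) lam i = 1 /\
    x = \sum_(i < k) lam i *: p i.

(* Main.v *)
Require Import Defs.
From mathcomp Require Import all_boot all_order all_algebra.
Import Order.TTheory GRing.Theory Num.Theory.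
Local Open Scope ring_scope.

Lemma tele (R : numDomainType) (v : nat -> R) a b : (a <= b)%N ->
  \sum_(a <= i < b) (v i - v i.+1) = v a - v b.
Proof.
move=> hab.
rewrite (eq_bigr (fun i => - (v i.+1 - v i))); last by move=> i _; rewrite opprB.
by rewrite sumrN telescope_sumr // opprB.
Qed.

Theorem proposition10 (R : realFieldType) (m n : nat)
  (y : 'I_n -> 'rV[R]_m) (theta : R -> 'I_n -> R) (beta : 'I_n -> R)
  (x : R -> 'rV[R]_m)
  (hx : forall t, 0 <= t -> x t = \sum_(i < n) theta t i *: y i)
  (hbeta : forall i, 0 < beta i)
  (hpos : forall t, 0 <= t -> forall i, 0 <= theta t i)
  (hmono : forall t, 0 <= t -> forall i j : 'I_n, (i <= j)%N ->
             beta j * theta t j <= beta i * theta t i)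
  (h0 : forall t, 0 <= t -> forall i0 : 'I_n, val i0 = 0%N -> theta t i0 <= 1) :
  forall t, 0 <= t ->
    in_conv_hull
      (fun i : 'I_n.+1 =>
         \sum_(j < n | (j < i)%N)
            ((\sum_(k < n | val k == 0%N) beta k) / beta j) *: y j)
      (x t).
Proof.
move=> t ht.
case: n y theta beta x hx hbeta hpos hmono h0 => [|n] y theta beta x hx hbeta hpos hmono h0.
  exists (fun _ => 1); split; first by move=> _; exact: ler01.
  split; first by rewrite big_ord1.
  by rewrite hx // big_ord0 big_ord1 big_ord0 scaler0.
set c := \sum_(k < n.+1 | val k == 0%N) beta k.
have hc : c = beta ord0.
  rewrite /c big_mkcond big_ord_recl /= big1 ?addr0 // => i; by rewrite /bump.
have cpos : 0 < c by rewrite hc.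
pose w k := if (k < n.+1)%N then beta (inord k) * theta t (inord k) / c else 0.
pose v k := if k is k'.+1 then w k' else 1.
exists (fun i : 'I_n.+2 => v i - v i.+1); split.
  move=> [[|k] hk] /=; rewrite subr_ge0 /w.
    rewrite ltn0Sn.
    have -> : (inord 0 : 'I_n.+1) = ord0 by apply: val_inj; rewrite /= inordK.
    by rewrite hc mulrC mulKf ?lt0r_neq0 ?hbeta // h0.
  have hk' : (k < n.+1)%N by [].
  rewrite hk'; case: ltnP => hk2.
    rewrite ler_pM2r ?invr_gt0 //; apply: hmono => //.
    by rewrite !inordK.
  by apply: divr_ge0; [apply: mulr_ge0; [exact: ltW | exact: hpos] | exact: ltW].
split.
  rewrite -(big_mkord xpredT (fun i => v i - v i.+1)) tele //=.
  by rewrite /w ltnn subr0.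
rewrite hx //; symmetry.
under eq_bigr => i _ do rewrite scaler_sumr big_mkcond /=.
rewrite exchange_big /=; apply: eq_bigr => j _.
rewrite -big_mkcond /= -scaler_suml scalerA.
have -> : \sum_(i < n.+2 | (j < i)%N) (v i - v i.+1) = w j.
  have -> : \sum_(i < n.+2 | (j < i)%N) (v i - v i.+1) =
            \sum_(j.+1 <= i < n.+2) (v i - v i.+1).
    by rewrite big_geq_mkord; apply: eq_bigl => i.
  rewrite tele //.
  by rewrite /= /w ltnn subr0.
  by apply: ltnW; rewrite ltnS. congr (_ *: _); rewrite /w ltn_ord inord_val.
have hb : beta j != 0 by rewrite lt0r_neq0.
have hc0 : c != 0 by rewrite lt0r_neq0.
by rewrite mulrA divfK // mulrC mulKf.
Qed.
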